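(* In the Cross Model on $\mathbb{Z}_K$ (with $K\ge1$ an integer and $\varepsilon\in(0,1)$), for every integer $n\ge0$, \[ n\big(1+2\varepsilon\nu_{K,\varepsilon}(\bullet,\circ)\big)\le \mathbf{E}\big(D^{K,d}(n,0)\big)\le n\big(1+2\varepsilon\nu_{K,\varepsilon}(\bullet,\circ)\big)+2K. \]
   Context: Cross Model: $\mathbb{Z}_K=\mathbb{Z}\times[\![-K,K]\!]$ with vertical edges $(i,j)\to(i,j+1)$, horizontal edges $(i,j)\to(i+1,j)$ and diagonal edges $(i,j)\to(i+1,j\pm1)$ (within the strip). Vertical and horizontal edges have length $1$, diagonal edges length $2$. All vertical and diagonal edges are open; each horizontal edge is open with probability $1-\varepsilon$, independently. $D^{K,d}(i,j)$ is the length of a shortest open path in $\mathbb{Z}_K$ from $(0,0)$ to $(i,j)$. $\nu_{K,\varepsilon}$ is the stationary distribution of the discrete-time synchronous TASEP on $[\![-K+1,K]\!]$ (state space $\{\bullet,\circ\}^{2K}$, elements $(y^{-K+1},\dots,y^K)$, $\bullet$ = occupied) in which, from time $t$ to $t+1$ independently: each particle at $j<K$ with $j+1$ empty at time $t$ moves to $j+1$ with probability $\varepsilon$; a particle enters at the empty site $-K+1$ with probability $\varepsilon$; a particle at site $K$ exits with probability $\varepsilon$. $\nu_{K,\varepsilon}(\bullet,\circ)=\nu_{K,\varepsilon}(y^0=\bullet,\,y^1=\circ)$. *)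

(* Defs.v *)
From HB Require Import structures.
From mathcomp Require Import all_boot all_order all_algebra.
From mathcomp Require Import boolp classical_sets reals.

Set Implicit Arguments.
Unset Strict Implicit.
Unset Printing Implicit Defensive.

Import Order.TTheory GRing.Theory Num.Theory.
Local Open Scope ring_scope.
Local Open Scope classical_set_scope.

Definition vertex := (int * int)%type.

Definition in_strip (K : nat) (v : vertex) : bool :=
  (- (K%:Z) <= v.2) && (v.2 <= K%:Z).

Definition edge_len (w : int -> int -> bool) (a b : vertex) : option nat :=
  if b == (a.1, a.2 + 1) then Some 1%N
  else if b == (a.1 + 1, a.2) then
    (if w a.1 a.2 then Some 1%N else None)
  else if (b == (a.1 + 1, a.2 + 1)) || (b == (a.1 + 1, a.2 - 1))
  then Some 2%N
  else None.

Definition open_edge (K : nat) (w : int -> int -> bool) (a b : vertex) : bool :=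
  [&& in_strip K a, in_strip K b & edge_len w a b != None].

Definition open_path (K : nat) (w : int -> int -> bool)
    (u : vertex) (p : seq vertex) (v : vertex) : bool :=
  path (open_edge K w) u p && (last u p == v).

Definition path_len (w : int -> int -> bool) (u : vertex) (p : seq vertex) : nat :=
  (\sum_(e <- zip (u :: p) p) odflt 0 (edge_len w e.1 e.2))%N.

Definition Dist {R : realType} (K : nat) (w : int -> int -> bool) (v : vertex) : R :=
  inf [set r : R | exists p : seq vertex,
         open_path K w (0, 0) p v /\ r = (path_len w (0, 0) p)%:R].

(* Randomness.  The shortest path from (0,0) to (n,0), n >= 0, only   *)
(* uses horizontal edges (i,j)->(i+1,j) with 0 <= i < n, -K <= j <= K *)
(* (edges are directed rightwards/upwards).  We thus take as          *)
(* probability space the independent Bernoulli states of these        *)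
(* edges; every other horizontal edge is set open (irrelevant).       *)
(* Coordinate (x, y) : 'I_n * 'I_(2K+1) is the edge at (x, y - K).    *)

Definition hconfig (n K : nat) := {ffun 'I_n * 'I_(K.*2.+1) -> bool}.

Definition env (n K : nat) (c : hconfig n K) (i j : int) : bool :=
  match i, (j + K%:Z) with
  | Posz a, Posz b =>
      match (insub a : option 'I_n), (insub b : option 'I_(K.*2.+1)) with
      | Some x, Some y => c (x, y)
      | _, _ => true
      end
  | _, _ => true
  end.

Definition hweight {R : realType} (n K : nat) (eps : R) (c : hconfig n K) : R :=
  \prod_(x : 'I_n * 'I_(K.*2.+1)) (if c x then 1 - eps else eps).

Definition ED {R : realType} (K : nat) (eps : R) (n : nat) : R :=
  \sum_(c : hconfig n K) hweight eps c * Dist K (env c) (n%:Z, 0).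

(* Discrete-time synchronous TASEP on [-K+1, K].                      *)
(* States: {ffun 'I_(2K) -> bool}, index k <-> site k - K + 1,        *)
(* true = occupied.  Bonds b : 'I_(2K+1): bond 0 = entry at site -K+1,*)
(* bond b (1 <= b <= 2K-1) = jump from index b-1 to index b,          *)
(* bond 2K = exit from site K.  Each active bond fires independently  *)
(* with probability eps.                                              *)

Definition tstate (K : nat) := {ffun 'I_(K.*2) -> bool}.
Definition tbonds (K : nat) := {ffun 'I_(K.*2.+1) -> bool}.

Definition occ (K : nat) (y : tstate K) (k : nat) : bool :=
  if (insub k : option 'I_(K.*2)) is Some x then y x else false.

Definition fired (K : nat) (f : tbonds K) (b : nat) : bool :=
  if (insub b : option 'I_(K.*2.+1)) is Some x then f x else false.

Definition active (K : nat) (y : tstate K) (b : nat) : bool :=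
  if b == 0%N then ~~ occ y 0
  else if b == K.*2 then occ y (K.*2).-1
  else occ y b.-1 && ~~ occ y b.

Definition bweight {R : realType} (K : nat) (eps : R) (y : tstate K) (f : tbonds K) : R :=
  \prod_(b : 'I_(K.*2.+1))
     (if active y b then (if f b then eps else 1 - eps)
      else (if f b then 0 else 1)).

Definition tupdate (K : nat) (y : tstate K) (f : tbonds K) : tstate K :=
  [ffun k : 'I_(K.*2) => (y k && ~~ fired f k.+1) || fired f k].

Definition ttrans {R : realType} (K : nat) (eps : R) (y y' : tstate K) : R :=
  \sum_(f : tbonds K) bweight eps y f * (tupdate y f == y')%:R.

Definition tasep_stationary {R : realType} (K : nat) (eps : R)
    (nu : {ffun tstate K -> R}) : Prop :=
  [/\ forall y, 0 <= nu y,
      \sum_(y : tstate K) nu y = 1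
    & forall y' : tstate K, \sum_(y : tstate K) nu y * ttrans eps y y' = nu y'].

(* nu(y^0 = occupied, y^1 = empty); site 0 <-> index K-1, site 1 <-> index K *)
Definition nu_oc {R : realType} (K : nat) (nu : {ffun tstate K -> R}) : R :=
  \sum_(y : tstate K | occ y K.-1 && ~~ occ y K) nu y.

(* Main.v *)
Require Import Defs.
From HB Require Import structures.
From mathcomp Require Import all_boot all_order all_algebra.
From mathcomp Require Import boolp classical_sets reals.
From mathcomp Require Import zify ring lra.
Import Order.TTheory GRing.Theory Num.Theory.
Local Open Scope ring_scope.

Module Aux.
Set Implicit Arguments.
Unset Strict Implicit.
Unset Printing Implicit Defensive.


Section Heights.
Variable K : nat.
Hypothesis K1 : (1 <= K)%N.
Implicit Types (col : nat -> bool) (h g : nat -> int).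

Definition dl (h : nat -> int) (b : nat) : int := h b.+1 - h b.
Definition valid (h : nat -> int) := forall b, (b < K.*2)%N -> dl h b = 1 \/ dl h b = -1.
Definition state_of (h : nat -> int) : tstate K := [ffun k : 'I_(K.*2) => dl h k == -1].
Definition fire (h : nat -> int) (col : nat -> bool) (b : nat) : bool :=
  ~~ col b && active (state_of h) b.
Definition step (h : nat -> int) (col : nat -> bool) : nat -> int :=
  fun b => h b + (if fire h col b then 3 else 1).

Lemma occ_state h k : (k < K.*2)%N -> occ (state_of h) k = (dl h k == -1).
Proof. by move=> hk; rewrite /occ (insubT (fun i => i < K.*2)%N hk) /= ffunE. Qed.

Lemma K2pos : (0 < K.*2)%N.
Proof. by rewrite double_gt0. Qed.

Lemma act_l h b : valid h -> (b <= K.*2)%N -> active (state_of h) b ->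
  (0 < b)%N -> dl h b.-1 = -1.
Proof.
move=> V hb; rewrite /active; case: eqP => [->//|b0].
case: eqP => [-> | b2].
  have hk : ((K.*2).-1 < K.*2)%N by lia.
  by rewrite occ_state // => /eqP.
have hk : (b.-1 < K.*2)%N by lia.
by case/andP; rewrite occ_state // => /eqP.
Qed.

Lemma act_r h b : valid h -> (b <= K.*2)%N -> active (state_of h) b ->
  (b < K.*2)%N -> dl h b = 1.
Proof.
move=> V hb; rewrite /active; case: eqP => [-> | b0].
  rewrite occ_state ?double_gt0 // => /eqP H _.
  by case: (V 0%N); rewrite ?double_gt0.
case: eqP => [-> | b2]; first by rewrite ltnn.
move=> /andP[_ H] hb'; move: H; rewrite occ_state // => /eqP H.
by case: (V b hb').
Qed.

Lemma nact h b : valid h -> (b <= K.*2)%N -> ~~ active (state_of h) b ->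
  ((0 < b)%N /\ dl h b.-1 = 1) \/ ((b < K.*2)%N /\ dl h b = -1).
Proof.
move=> V hb; rewrite /active; case: eqP => [-> | b0].
  rewrite negbK occ_state ?double_gt0 // => /eqP H; right; split=> //.
case: eqP => [-> | b2].
  have hk : ((K.*2).-1 < K.*2)%N by lia.
  rewrite occ_state // => /eqP H; left; split; first by lia.
  by case: (V (K.*2).-1).
rewrite negb_and negbK; case/orP.
  have hk : (b.-1 < K.*2)%N by lia.
  rewrite occ_state // => /eqP H; left; split; first by lia.
  by case: (V b.-1).
have hk : (b < K.*2)%N by lia.
by rewrite occ_state // => /eqP H; right; split.
Qed.


Lemma step_horiz h col b : col b -> step h col b <= h b + 1.
Proof. by move=> cb; rewrite /step /fire cb. Qed.

Lemma step_up h col b : valid h -> (b < K.*2)%N -> step h col b.+1 <= h b + 2.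
Proof.
move=> V hb; rewrite /step /fire; case: ifP => [/andP[_ A]|_].
  have := act_l V hb A isT; rewrite /dl /= => H; lia.
case: (V b hb); rewrite /dl => H; lia.
Qed.

Lemma step_down h col b : valid h -> (b < K.*2)%N -> step h col b <= h b.+1 + 2.
Proof.
move=> V hb; rewrite /step /fire; case: ifP => [/andP[_ A]|_].
  have := act_r V (ltnW hb) A hb; rewrite /dl /= => H; lia.
case: (V b hb); rewrite /dl => H; lia.
Qed.

Lemma dl_step h col b : dl (step h col) b =
  dl h b + (if fire h col b.+1 then 2 else 0) - (if fire h col b then 2 else 0).
Proof. rewrite /dl /step; case: (fire _ _ b); case: (fire _ _ b.+1); lia. Qed.

Lemma valid_step h col : valid h -> valid (step h col).
Proof.
move=> V b hb; rewrite dl_step.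
case: (V b hb) => H.
  case F: (fire h col b.+1).
    move: F; rewrite /fire => /andP[_ A].
    have := act_l V hb A isT => /= H'; lia.
  case: (fire h col b); lia.
case F: (fire h col b).
  move: F; rewrite /fire => /andP[_ A].
  have := act_r V (ltnW hb) A hb => H'; lia.
case: (fire h col b.+1); lia.
Qed.

Lemma fake_step h col m : valid h -> (m <= K.*2)%N ->
  (forall a, (a < m)%N -> dl h a = -1) ->
  forall a, (a.+1 < m)%N -> dl (step h col) a = -1.
Proof.
move=> V hm F a ha.
have Fa : dl h a = -1 by apply: F; lia.
have Fa1 : dl h a.+1 = -1 by apply: F; lia.
have hb : (a.+1 < K.*2)%N by lia.
rewrite dl_step Fa.
case F1: (fire h col a).
  move: F1; rewrite /fire => /andP[_ A].
  have := act_r V (ltnW (ltnW hb)) A (ltnW hb); lia.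
case F2: (fire h col a.+1); last by lia.
move: F2; rewrite /fire => /andP[_ A].
have := act_r V (ltnW hb) A hb; lia.
Qed.

Lemma step_achieve h col m b : valid h -> (m <= K)%N ->
  (forall a, (a < m)%N -> dl h a = -1) -> (b <= K.*2)%N -> (m <= b.+1)%N ->
  [\/ [/\ col b, (m <= b)%N & step h col b = h b + 1],
      [/\ (0 < b)%N, (m <= b.-1)%N & step h col b = h b.-1 + 2]
    | (b < K.*2)%N /\ step h col b = h b.+1 + 2].
Proof.
move=> V hm F hb hmb.
have dlm : forall a, (a < K.*2)%N -> dl h a = 1 -> (m <= a)%N.
  move=> a ha da; case: (leqP m a) => // am; have := F a am; lia.
case Fb: (fire h col b).
  have A : active (state_of h) b by move: Fb; rewrite /fire => /andP[].
  rewrite /step Fb.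
  case: (ltnP b K.*2) => hb2.
    have := act_r V hb A hb2; rewrite /dl => H; apply: Or33; split=>//; lia.
  have b2 : b = K.*2 by lia.
  have b0 : (0 < b)%N by lia.
  have := act_l V hb A b0; rewrite /dl.
  have -> : b.-1.+1 = b by lia.
  move=> H; apply: Or32; split; lia.
rewrite /step Fb.
case: (ltnP b K.*2) => hb2.
  case: (V b hb2) => H.
    case cb: (col b).
      have := dlm b hb2 H => mb.
      by apply: Or31; split=>//; lia.
    have nA : ~~ active (state_of h) b by move: Fb; rewrite /fire cb /= => ->.
    case: (nact V hb nA) => [[b0 H']|[_ H']]; last by lia.
    have mb : (m <= b.-1)%N by apply: dlm => //; lia.
    move: H'; rewrite /dl; have -> : b.-1.+1 = b by lia.
    by move=> H'; apply: Or32; split; lia.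
  by apply: Or33; split=>//; move: H; rewrite /dl; lia.
have b2 : b = K.*2 by lia.
case cb: (col b).
  by apply: Or31; split=>//; lia.
have nA : ~~ active (state_of h) b by move: Fb; rewrite /fire cb /= => ->.
case: (nact V hb nA) => [[b0 H']|[H1 _]]; last by lia.
move: H'; rewrite /dl; have -> : b.-1.+1 = b by lia.
move=> H'; apply: Or32; split; lia.
Qed.

Lemma step_mono h g col (a : int) : valid h -> valid g ->
  (forall b, (b <= K.*2)%N -> h b <= g b + a) ->
  forall b, (b <= K.*2)%N -> step h col b <= step g col b + a.
Proof.
move=> Vh Vg H b hb.
case: (@step_achieve g col 0 b Vg isT (fun a => fun x => match (notF x) with end) hb isT).
- move=> [cb _ ->]; have := step_horiz h cb; have := H b hb; lia.
- move=> [b0 _ ->]; have hb1 : (b.-1 < K.*2)%N by lia.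
  have := step_up col Vh hb1; have -> : b.-1.+1 = b by lia.
  have := H b.-1 (ltnW hb1); lia.
- move=> [hb2 ->]; have := step_down col Vh hb2; have := H b.+1 hb2; lia.
Qed.

Lemma state_step h col : valid h ->
  state_of (step h col) = tupdate (state_of h) [ffun b : 'I_(K.*2.+1) => fire h col b].
Proof.
move=> V; apply/ffunP => k; rewrite !ffunE.
have fE : forall j, (j <= K.*2)%N ->
    fired [ffun b : 'I_(K.*2.+1) => fire h col b] j = fire h col j.
  by move=> j hj; rewrite /fired (insubT (fun i => i < K.*2.+1)%N hj) /= ffunE.
have hk := ltn_ord k.
rewrite !fE //; last by lia.
rewrite dl_step.
case: (V k hk) => H.
  case F: (fire h col k.+1).
    move: F; rewrite /fire => /andP[_ A].
    have := act_l V hk A isT => /= H'; lia.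
  case: (fire h col k); rewrite H //=.
case F: (fire h col k).
  move: F; rewrite /fire => /andP[_ A].
  have := act_r V (ltnW hk) A hk => H'; lia.
rewrite H /=; case: (fire h col k.+1); rewrite ?orbF //.
Qed.

End Heights.


Fixpoint plen (w : int -> int -> bool) (u : vertex) (p : seq vertex) : nat :=
  match p with [::] => 0%N | a :: p' => (odflt 0%N (edge_len w u a) + plen w a p')%N end.

Lemma path_lenE w u p : path_len w u p = plen w u p.
Proof.
elim: p u => [|a p IH] u; first by rewrite /path_len big_nil.
by rewrite /path_len /= big_cons /= -IH.
Qed.

Lemma plen_rcons w u p a :
  plen w u (rcons p a) = (plen w u p + odflt 0%N (edge_len w (last u p) a))%N.
Proof. by elim: p u => [|x p IH] u /=; rewrite ?addn0 // IH addnA. Qed.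

Lemma open_path_rcons K w u p v a : open_path K w u p v -> open_edge K w v a ->
  open_path K w u (rcons p a) a.
Proof.
rewrite /open_path => /andP[P /eqP L] E.
by rewrite rcons_path P L E last_rcons eqxx.
Qed.

Section Hist.
Variables (n K : nat).
Hypothesis K1 : (1 <= K)%N.
Variable c : hconfig n K.

Definition colf (i : nat) : nat -> bool := fun b => env c (Posz i) (Posz b - Posz K).

Fixpoint hist (h0 : nat -> int) (i : nat) : nat -> int :=
  match i with 0%N => h0 | i'.+1 => step K (hist h0 i') (colf i') end.

Definition h0y (b : nat) : int := if (b <= K)%N then Posz (K - b) else Posz (b - K).

Lemma valid_h0y : valid K h0y.
Proof. move=> b hb; rewrite /dl /h0y; case: ifP; case: ifP; lia. Qed.

Lemma hist_valid h0 i : valid K h0 -> valid K (hist h0 i).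
Proof. by move=> V; elim: i => //= i IH; apply: valid_step. Qed.

Lemma hist_fake i : forall a, (a < K - i)%N -> dl (hist h0y i) a = -1.
Proof.
elim: i => [|i IH] a ha /=.
  rewrite /dl /h0y; case: ifP; case: ifP; lia.
apply: (@fake_step K K1 _ _ (K - i)) => //.
- exact: hist_valid valid_h0y.
- lia.
- lia.
Qed.

Definition w := env c.

Lemma edge_pot i b a : (b <= K.*2)%N ->
  open_edge K w (Posz i, Posz b - Posz K) a ->
  exists i' b', [/\ a = (Posz i', Posz b' - Posz K), (b' <= K.*2)%N &
    hist h0y i' b' <= hist h0y i b + Posz (odflt 0%N (edge_len w (Posz i, Posz b - Posz K) a))].
Proof.
move=> hb; case: a => x y; rewrite /open_edge /in_strip => /and3P[_ S E].
have V := hist_valid i valid_h0y.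
move: E S; rewrite /edge_len.
case: ifP => [/eqP [-> ->] _ /= S | E1].
  have hb' : (b < K.*2)%N by lia.
  exists i, b.+1; split; [congr (_,_); lia | lia |].
  case: (V b hb'); rewrite /dl /=; lia.
case: ifP => [/eqP [-> ->] | E2].
  case Wb: (w _ _) => // _ S.
  exists i.+1, b; split; [congr (_,_); lia | lia |] => /=.
  have := @step_horiz K (hist h0y i) (colf i) b Wb; lia.
case: ifP => // /orP [/eqP [-> ->] | /eqP [-> ->]] _ /= S.
  have hb' : (b < K.*2)%N by lia.
  exists i.+1, b.+1; split; [congr (_,_); lia | lia |] => /=.
  have := @step_up K K1 (hist h0y i) (colf i) b V hb'; lia.
have hb' : (b.-1 < K.*2)%N by lia.
exists i.+1, b.-1; split; [congr (_,_); lia | lia |] => /=.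
have := @step_down K K1 (hist h0y i) (colf i) b.-1 V hb'.
have -> : b.-1.+1 = b by lia.
lia.
Qed.

Lemma path_lb p : forall i b v, (b <= K.*2)%N ->
  open_path K w (Posz i, Posz b - Posz K) p v ->
  exists i' b', [/\ v = (Posz i', Posz b' - Posz K), (b' <= K.*2)%N &
    hist h0y i' b' <= hist h0y i b + Posz (plen w (Posz i, Posz b - Posz K) p)].
Proof.
elim: p => [|a p IH] i b v hb.
  rewrite /open_path /= => /eqP <-; exists i, b; split=> //; lia.
rewrite /open_path /= => /andP[/andP[E P] L].
have [i1 [b1 [Ea hb1 H1]]] := edge_pot hb E.
rewrite Ea in P L H1.
have := IH i1 b1 v hb1; rewrite /open_path P L => /(_ isT).
move=> [i' [b' [-> hb' H2]]]; exists i', b'; split=> //.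
rewrite Ea /=; apply: le_trans H2 _; rewrite PoszD addrA lerD2r; exact: H1.
Qed.

Lemma el_v x y : edge_len w (x, y) (x, y + 1) = Some 1%N.
Proof. by rewrite /edge_len /= eqxx. Qed.
Lemma el_h x y : edge_len w (x, y) (x + 1, y) = if w x y then Some 1%N else None.
Proof.
rewrite /edge_len /=.
have -> : ((x + 1, y) == (x, y + 1)) = false by rewrite xpair_eqE; lia.
by rewrite eqxx.
Qed.
Lemma el_u x y : edge_len w (x, y) (x + 1, y + 1) = Some 2%N.
Proof.
rewrite /edge_len /=.
have -> : ((x + 1, y + 1) == (x, y + 1)) = false by rewrite xpair_eqE; lia.
have -> : ((x + 1, y + 1) == (x + 1, y)) = false by rewrite xpair_eqE; lia.
by rewrite eqxx.
Qed.
Lemma el_d x y : edge_len w (x, y) (x + 1, y - 1) = Some 2%N.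
Proof.
rewrite /edge_len /=.
have -> : ((x + 1, y - 1) == (x, y + 1)) = false by rewrite xpair_eqE; lia.
have -> : ((x + 1, y - 1) == (x + 1, y)) = false by rewrite xpair_eqE; lia.
by rewrite eqxx orbT.
Qed.

Lemma path_ext u p v a l : open_path K w u p v -> in_strip K v -> in_strip K a ->
  edge_len w v a = Some l ->
  open_path K w u (rcons p a) a /\ plen w u (rcons p a) = (plen w u p + l)%N.
Proof.
move=> P Sv Sa El; have [_ /eqP L] := andP P.
split; first by apply: (open_path_rcons P); rewrite /open_edge Sv Sa El.
by rewrite plen_rcons L El.
Qed.

Lemma vert_ex t : (t <= K)%N -> exists p, open_path K w (0, 0) p (0, Posz t) /\ plen w (0,0) p = t.
Proof.
elim: t => [|t IH] ht.
  by exists [::]; rewrite /open_path /= eqxx.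
have [p [P L]] := IH (ltnW ht).
have := @path_ext (0,0) p (0, Posz t) (0, Posz t + 1) 1%N P.
rewrite el_v /in_strip /= => /(_ _ _ erefl) [].
- lia.
- lia.
move=> P' L'; exists (rcons p (0, Posz t + 1)); split; last by rewrite L' L addn1.
by have -> : Posz t.+1 = Posz t + 1 by lia.
Qed.

Lemma path_ex i : forall b, (b <= K.*2)%N -> (K <= b + i)%N ->
  exists p, open_path K w (0, 0) p (Posz i, Posz b - Posz K) /\
    Posz (plen w (0,0) p) = hist h0y i b.
Proof.
elim: i => [|i IH] b hb hbi.
  have hbk : (b - K <= K)%N by lia.
  have [p [P L]] := @vert_ex (b - K) hbk.
  exists p; split.
    by have -> : (Posz 0, Posz b - Posz K) = (0, Posz (b - K)) by congr (_,_); lia.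
  rewrite L /= /h0y; case: ifP; lia.
have V := hist_valid i valid_h0y.
have F := @hist_fake i.
have m1 : (K - i <= K)%N by lia.
have m2 : (K - i <= b.+1)%N by lia.
case: (@step_achieve K K1 (hist h0y i) (colf i) (K - i) b V m1 F hb m2).
- move=> [cb mb E].
  have hh : (K <= b + i)%N by lia.
  have [p [P L]] := IH b hb hh.
  have := @path_ext (0,0) p _ (Posz i + 1, Posz b - Posz K) 1%N P.
  rewrite el_h.
  have -> : w i (Posz b - Posz K) = true by exact: cb.
  rewrite /in_strip /= => /(_ _ _ erefl) [].
  + lia.
  + lia.
  move=> P' L'; exists (rcons p (Posz i + 1, Posz b - Posz K)); split.
    by have -> : Posz i.+1 = Posz i + 1 by lia.
  by rewrite L' /= E -L PoszD.
- move=> [b0 mb E].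
  have hh1 : (b.-1 <= K.*2)%N by lia.
  have hh2 : (K <= b.-1 + i)%N by lia.
  have [p [P L]] := IH b.-1 hh1 hh2.
  have := @path_ext (0,0) p _ (Posz i + 1, Posz b.-1 - Posz K + 1) 2%N P.
  rewrite el_u /in_strip /= => /(_ _ _ erefl) [].
  + lia.
  + lia.
  move=> P' L'; exists (rcons p (Posz i + 1, Posz b.-1 - Posz K + 1)); split.
    by have -> : (Posz i.+1, Posz b - Posz K) = (Posz i + 1, Posz b.-1 - Posz K + 1)
      by congr (_,_); lia.
  by rewrite L' /= E -L PoszD.
- move=> [hb2 E].
  have hh1 : (b.+1 <= K.*2)%N by lia.
  have hh2 : (K <= b.+1 + i)%N by lia.
  have [p [P L]] := IH b.+1 hh1 hh2.
  have := @path_ext (0,0) p _ (Posz i + 1, Posz b.+1 - Posz K - 1) 2%N P.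
  rewrite el_d /in_strip /= => /(_ _ _ erefl) [].
  + lia.
  + lia.
  move=> P' L'; exists (rcons p (Posz i + 1, Posz b.+1 - Posz K - 1)); split.
    by have -> : (Posz i.+1, Posz b - Posz K) = (Posz i + 1, Posz b.+1 - Posz K - 1)
      by congr (_,_); lia.
  by rewrite L' /= E -L PoszD.
Qed.


Lemma Dist_hist (R : realType) : exists L : nat,
  Posz L = hist h0y n K /\ Dist (R:=R) K (env c) (Posz n, 0) = L%:R.
Proof.
have hK : (K <= K.*2)%N by lia.
have hK' : (K <= K + n)%N by lia.
have [p [P L]] := path_ex hK hK'.
have E0 : (Posz n, Posz K - Posz K) = (Posz n, 0) by rewrite subrr.
rewrite E0 in P.
exists (plen w (0,0) p); split=> //.
rewrite /Dist; set S := (X in inf X).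
have Sp : S (plen w (0,0) p)%:R by exists p; rewrite path_lenE.
have lb : lbound S (plen w (0,0) p)%:R.
  move=> r [q [Q ->]]; rewrite ler_nat path_lenE.
  have Z : ((0 : int), (0 : int)) = (Posz 0, Posz K - Posz K) by rewrite subrr.
  rewrite Z in Q.
  have [i' [b' [Ev hb' H]]] := path_lb hK Q.
  move: Ev H; rewrite -Z => /eqP; rewrite xpair_eqE => /andP[/eqP Ei /eqP Eb].
  have -> : i' = n by lia.
  have -> : b' = K by lia.
  rewrite -L /= /h0y leqnn subnn.
  by rewrite add0r lez_nat.
apply/le_anti/andP; split.
  by apply: ge_inf => //; exists (plen w (0,0) p)%:R.
by apply: lb_le_inf => //; exists (plen w (0,0) p)%:R.
Qed.

End Hist.


Section Gen.
Variable R : realType.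
Variable eps : R.
Definition wt (b : bool) : R := if b then 1 - eps else eps.
Definition Wt (X : finType) (c : {ffun X -> bool}) : R := \prod_x wt (c x).

Lemma sum_wt : \sum_(b : bool) wt b = 1.
Proof. by rewrite big_bool /wt /= subrK. Qed.

Lemma sum_prod (X : finType) (F : X -> bool -> R) :
  \sum_(c : {ffun X -> bool}) \prod_x F x (c x) = \prod_x \sum_(b : bool) F x b.
Proof. by rewrite bigA_distr_bigA. Qed.

Lemma sumW (X : finType) : \sum_(c : {ffun X -> bool}) Wt c = 1.
Proof. by rewrite /Wt (sum_prod (fun _ b => wt b)) big1 // => x _; exact: sum_wt. Qed.

Lemma sumW_pt (X : finType) (x0 : X) (F : bool -> R) :
  \sum_(c : {ffun X -> bool}) Wt c * F (c x0) = \sum_(b : bool) wt b * F b.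
Proof.
transitivity (\sum_(c : {ffun X -> bool}) \prod_x (wt (c x) * (if x == x0 then F (c x) else 1))).
  apply: eq_bigr => c _; rewrite big_split /= /Wt; congr (_ * _).
  by rewrite (bigD1 x0) //= eqxx big1 ?mulr1 // => x /negbTE ->.
rewrite (sum_prod (fun x b => wt b * (if x == x0 then F b else 1))) (bigD1 x0) //= [X in _ * X]big1 ?mulr1.
  by apply: eq_bigr => b _; rewrite eqxx.
move=> x /negbTE xn; rewrite -[RHS]sum_wt; apply: eq_bigr => b _.
by rewrite xn mulr1.
Qed.

Definition fmerge (X : finType) (S : pred X) (c d : {ffun X -> bool}) : {ffun X -> bool} :=
  [ffun x => if S x then d x else c x].

Lemma Wt_merge (X : finType) (S : pred X) c d :
  Wt (fmerge S c d) * Wt (fmerge S d c) = Wt c * Wt d.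
Proof.
rewrite /Wt -!big_split /=; apply: eq_bigr => x _; rewrite !ffunE.
by case: (S x) => //; rewrite mulrC.
Qed.

Lemma merge_inv (X : finType) (S : pred X) c d : fmerge S (fmerge S c d) (fmerge S d c) = c.
Proof. by apply/ffunP => x; rewrite !ffunE; case: (S x). Qed.

Lemma indep (X : finType) (S : pred X) (A B : {ffun X -> bool} -> R) :
  (forall c d, A (fmerge S c d) = A c) -> (forall c d, B (fmerge S c d) = B d) ->
  \sum_c Wt c * (A c * B c) = (\sum_c Wt c * A c) * (\sum_c Wt c * B c).
Proof.
move=> HA HB; symmetry.
rewrite big_distrl /=.
under eq_bigr do rewrite big_distrr /=.
rewrite pair_big /=.
pose sg := fun p : {ffun X -> bool} * {ffun X -> bool} => (fmerge S p.1 p.2, fmerge S p.2 p.1).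
have sgK : involutive sg by case=> c d; rewrite /sg /= !merge_inv.
rewrite (reindex_inj (inv_inj sgK)) /=.
transitivity (\sum_(p : {ffun X -> bool} * {ffun X -> bool}) (Wt p.1 * (A p.1 * B p.1)) * Wt p.2).
  apply: eq_bigr => -[c d] _ /=.
  rewrite HA HB.
  have := Wt_merge S c d.
  move=> E; rewrite mulrACA E; ring.
transitivity (\sum_(c : {ffun X -> bool}) \sum_(d : {ffun X -> bool}) (Wt c * (A c * B c)) * Wt d).
  by rewrite pair_big; apply: eq_bigr => -[c d].
apply: eq_bigr => c _; rewrite -big_distrr /= sumW mulr1 //.
Qed.

Lemma eq_ffun01 (T : finType) (f g : {ffun T -> bool}) :
  ((f == g)%:R : R) = \prod_t ((f t == g t)%:R).
Proof.
case: eqP => [->|/eqP ne].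
  by rewrite big1 // => t _; rewrite eqxx.
have [t Ht] : exists t, f t != g t.
  apply/existsP; apply: contraR ne => /existsPn H; apply/eqP/ffunP => t.
  by have := H t; rewrite negbK => /eqP.
by rewrite (bigD1 t) //= (negbTE Ht) mul0r.
Qed.

Lemma sum_delta (T : finType) (x : T) (G : T -> R) :
  \sum_y ((x == y)%:R * G y) = G x.
Proof.
rewrite (bigD1 x) //= eqxx mul1r big1 ?addr0 // => y /negbTE.
by rewrite eq_sym => ->; rewrite mul0r.
Qed.

Lemma slice n m (i : 'I_n) (F : 'I_m -> R) :
  \prod_(x : 'I_n * 'I_m) (if x.1 == i then F x.2 else 1) = \prod_b F b.
Proof.
transitivity (\prod_a \prod_b (if a == i then F b else 1)).
  by rewrite pair_big; apply: eq_bigr => -[a b].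
rewrite (bigD1 i) //= [X in _ * X]big1 ?mulr1; last first.
  by move=> a /negbTE an; rewrite big1 // => b _; rewrite an.
by apply: eq_bigr => b _; rewrite eqxx.
Qed.

Lemma col_marg n m (i : 'I_n) (G : {ffun 'I_m -> bool} -> R) :
  \sum_(c : {ffun 'I_n * 'I_m -> bool}) Wt c * G [ffun b => c (i, b)] =
  \sum_(col : {ffun 'I_m -> bool}) Wt col * G col.
Proof.
transitivity (\sum_(c : {ffun 'I_n * 'I_m -> bool}) \sum_col
    (Wt c * (([ffun b => c (i, b)] == col)%:R * G col))).
  by apply: eq_bigr => c _; rewrite -big_distrr /= sum_delta.
rewrite exchange_big /=; apply: eq_bigr => col _.
transitivity (\sum_(c : {ffun 'I_n * 'I_m -> bool}) \prod_x
    (wt (c x) * (if x.1 == i then (c x == col x.2)%:R else 1)) * G col).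
  apply: eq_bigr => c _; rewrite mulrA; congr (_ * _).
  rewrite big_split /=; congr (_ * _).
  transitivity (\prod_b ((c (i, b) == col b)%:R : R)).
    by rewrite eq_ffun01; apply: eq_bigr => b _; rewrite ffunE.
  rewrite -(slice i (fun b => (c (i, b) == col b)%:R)).
  by apply: eq_bigr => -[a b] _ /=; case: eqP => // ->.
rewrite -big_distrl /= (sum_prod (fun x b => wt b * (if x.1 == i then (b == col x.2)%:R else 1))).
congr (_ * _); rewrite /Wt -(slice i (fun b => wt (col b))).
apply: eq_bigr => -[a b] _ /=; case: eqP => _.
  by case: (col b); rewrite big_bool /= ?mulr1 ?mulr0 ?addr0 ?add0r.
by rewrite -[RHS]sum_wt; apply: eq_bigr => bb _; rewrite mulr1.
Qed.

Definition bmask K (y : tstate K) (col : tbonds K) : tbonds K :=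
  [ffun b => ~~ col b && active y b].

Lemma ttransE K (y y' : tstate K) :
  \sum_(col : tbonds K) Wt col * ((tupdate y (bmask y col) == y')%:R) = ttrans eps y y'.
Proof.
transitivity (\sum_(col : tbonds K) \sum_(f : tbonds K)
   (Wt col * ((bmask y col == f)%:R * (tupdate y f == y')%:R))).
  by apply: eq_bigr => col _; rewrite -big_distrr /= sum_delta.
rewrite exchange_big /=; apply: eq_bigr => f _.
transitivity (\sum_(col : tbonds K) \prod_b
    (wt (col b) * ((~~ col b && active y b) == f b)%:R) * (tupdate y f == y')%:R).
  apply: eq_bigr => col _; rewrite mulrA; congr (_ * _).
  rewrite big_split /= eq_ffun01; congr (_ * _).
  by apply: eq_bigr => b _; rewrite ffunE.
rewrite -big_distrl /= (sum_prod (fun (b : 'I_(K.*2.+1)) bb => wt bb * ((~~ bb && active y b) == f b)%:R)).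
congr (_ * _); rewrite /bweight; apply: eq_bigr => b _.
rewrite big_bool /wt /=.
by case: (active y b); case: (f b); rewrite /=; ring.
Qed.

End Gen.


Section Proc.
Variables (n K : nat).
Hypothesis K1 : (1 <= K)%N.

Definition gz (z : tstate K) (b : nat) : int := \sum_(k < b) (if occ z k then -1 else 1).
Definition h0z (z : tstate K) (b : nat) : int := gz z b - gz z K.

Lemma dl_h0z z b : dl (h0z z) b = if occ z b then -1 else 1.
Proof. rewrite /dl /h0z /gz big_ord_recr /=; case: (occ z b); ring. Qed.

Lemma valid_h0z z : valid K (h0z z).
Proof. by move=> b _; rewrite dl_h0z; case: (occ z b); [right|left]. Qed.

Lemma state_h0z z : state_of K (h0z z) = z.
Proof.
apply/ffunP => k; rewrite ffunE dl_h0z.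
rewrite /occ (insubT (fun i => i < K.*2)%N (ltn_ord k)) /=.
have -> : Sub (nat_of_ord k) (ltn_ord k) = k by apply: val_inj.
by case: (z k).
Qed.

Lemma gz_lip z a b : (a <= b)%N -> - Posz (b - a) <= gz z b - gz z a <= Posz (b - a).
Proof.
elim: b => [|b IH] ab.
  have -> : a = 0%N by lia.
  by rewrite subrr.
case: (ltnP a b.+1) => h; last first.
  have -> : a = b.+1 by lia.
  by rewrite subrr subnn.
have hab : (a <= b)%N by lia.
have := IH hab; rewrite /gz big_ord_recr /=.
case: (occ z b); set s := \sum_(i < b) _; lia.
Qed.

Lemma h0_cmp z b : (b <= K.*2)%N ->
  h0z z b <= h0y K b + 0 /\ h0y K b <= h0z z b + Posz (K.*2).
Proof.
move=> hb; rewrite /h0z /h0y addr0; case: ifP => h.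
  have := gz_lip z h; lia.
have h' : (K <= b)%N by lia.
have := gz_lip z h'; lia.
Qed.

Lemma hist_cmp (c : hconfig n K) z i : forall b, (b <= K.*2)%N ->
  hist c (h0z z) i b <= hist c (h0y K) i b + 0 /\
  hist c (h0y K) i b <= hist c (h0z z) i b + Posz (K.*2).
Proof.
elim: i => [|i IH] b hb /=; first exact: h0_cmp.
have Vz := hist_valid K1 c i (valid_h0z z).
have Vy := hist_valid K1 c i (valid_h0y K1).
split.
  apply: (step_mono K1 _ Vz Vy) => // b' hb'; exact: (IH b' hb').1.
apply: (step_mono K1 _ Vy Vz) => // b' hb'; exact: (IH b' hb').2.
Qed.

Lemma hist_dep (c d : hconfig n K) h0 i :
  (forall x : 'I_n * 'I_(K.*2.+1), (x.1 < i)%N -> c x = d x) ->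
  hist c h0 i = hist d h0 i.
Proof.
elim: i => [|i IH] H //=.
rewrite IH; last by move=> x hx; apply: H; lia.
congr step; apply: funext => b; rewrite /colf /env.
case: (Posz b - Posz K + Posz K) => // b'.
case: insubP => // x _ xi; case: insubP => // y _ _.
by apply: H => /=; rewrite xi.
Qed.

Lemma colfE (c : hconfig n K) (i : 'I_n) (b : 'I_(K.*2.+1)) : colf c i b = c (i, b).
Proof.
rewrite /colf /env subrK.
rewrite (insubT (fun k => k < n)%N (ltn_ord i)) (insubT (fun k => k < K.*2.+1)%N (ltn_ord b)).
by congr (c (_, _)); apply: val_inj.
Qed.

End Proc.


Section Prob.
Variables (R : realType) (K : nat) (eps : R) (nu : {ffun tstate K -> R}) (n : nat).
Hypothesis K1 : (1 <= K)%N.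
Hypothesis heps : 0 < eps < 1.
Hypothesis hnu : tasep_stationary eps nu.

Local Notation W := (@Wt R eps ('I_n * 'I_(K.*2.+1))%type).

Definition st (c : hconfig n K) (z : tstate K) i := state_of K (hist c (h0z z) i).

Lemma st_step c z (i : 'I_n) :
  st c z i.+1 = tupdate (st c z i) (bmask (st c z i) [ffun b => c (i, b)]).
Proof.
rewrite /st /= state_step //; last exact: (@hist_valid n K K1 c (h0z z) i (@valid_h0z K z)).
by congr tupdate; apply/ffunP => b; rewrite !ffunE /fire colfE.
Qed.

Lemma st_merge (i : 'I_n) z c d :
  st (fmerge [pred x : 'I_n * 'I_(K.*2.+1) | x.1 == i] c d) z i = st c z i.
Proof.
rewrite /st (@hist_dep n K K1 _ c) // => x hx; rewrite ffunE /=.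
by have -> : (x.1 == i) = false by apply/negbTE; rewrite neq_ltn hx.
Qed.

Lemma markov (i : 'I_n) z y' :
  \sum_c W c * (st c z i.+1 == y')%:R =
  \sum_y (\sum_c W c * (st c z i == y)%:R) * ttrans eps y y'.
Proof.
transitivity (\sum_c \sum_y W c * ((st c z i == y)%:R *
    (tupdate y (bmask y [ffun b => c (i, b)]) == y')%:R)).
  apply: eq_bigr => c _; rewrite -big_distrr /=; congr (_ * _).
  by rewrite (sum_delta (st c z i) (fun y => (tupdate y (bmask y [ffun b => c (i, b)]) == y')%:R)) st_step.
rewrite exchange_big /=; apply: eq_bigr => y _.
rewrite (@indep R eps _ [pred x : 'I_n * 'I_(K.*2.+1) | x.1 == i]
   (fun c => (st c z i == y)%:R)
   (fun c => (tupdate y (bmask y [ffun b => c (i, b)]) == y')%:R)).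
- congr (_ * _).
  rewrite (col_marg eps i (fun col => (tupdate y (bmask y col) == y')%:R)).
  exact: ttransE.
- by move=> c d /=; rewrite st_merge.
- move=> c d /=; congr ((tupdate y (bmask y _) == y')%:R).
  by apply/ffunP => b; rewrite !ffunE /= eqxx.
Qed.

Lemma stat i : (i <= n)%N -> forall y',
  \sum_z nu z * (\sum_c W c * (st c z i == y')%:R) = nu y'.
Proof.
have [_ Snu Tnu] := hnu.
elim: i => [|i IH] hi y'.
  transitivity (\sum_z ((z == y')%:R * nu y')).
    apply: eq_bigr => z _.
    rewrite /st /= state_h0z.
    rewrite -big_distrl /= sumW mul1r.
    by case: eqP => [->|]; rewrite ?mulr1 ?mul1r ?mulr0 ?mul0r.
  rewrite (bigD1 y') //= eqxx mul1r big1 ?addr0 // => z /negbTE ->; by rewrite mul0r.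
have hi' : (i < n)%N by lia.
pose io := Ordinal hi'.
transitivity (\sum_z nu z * \sum_y (\sum_c W c * (st c z io == y)%:R) * ttrans eps y y').
  by apply: eq_bigr => z _; rewrite -(markov io).
under eq_bigr do rewrite big_distrr /=.
rewrite exchange_big /= -[RHS]Tnu; apply: eq_bigr => y _.
rewrite -(IH (ltnW hi') y) big_distrl /=; apply: eq_bigr => z _.
by rewrite mulrA.
Qed.

Lemma occK : (K < K.*2.+1)%N.
Proof. lia. Qed.

Lemma firee (i : 'I_n) :
  \sum_z nu z * (\sum_c W c * (fire K (hist c (h0z z) i) (colf c i) K)%:R) =
  eps * nu_oc nu.
Proof.
have [nu0 Snu Tnu] := hnu.
pose K0 : 'I_(K.*2.+1) := Ordinal occK.
have FE : forall (c : hconfig n K) z, (fire K (hist c (h0z z) i) (colf c i) K)%:R =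
    \sum_y ((st c z i == y)%:R * ((active y K)%:R * (~~ c (i, K0))%:R) : R).
  move=> c z; rewrite (sum_delta (st c z i) (fun y => (active y K)%:R * (~~ c (i, K0))%:R)).
  rewrite /fire /st -(colfE c i K0) /=.
  by case: (active _ K); case: (colf c i K); rewrite /= ?mulr1 ?mulr0 ?mul0r.
have E1 : forall y z, \sum_c W c * ((st c z i == y)%:R * (~~ c (i, K0))%:R) =
    (\sum_c W c * (st c z i == y)%:R) * eps.
  move=> y z.
  rewrite (@indep R eps _ [pred x : 'I_n * 'I_(K.*2.+1) | x.1 == i]
     (fun c => (st c z i == y)%:R) (fun c => (~~ c (i, K0))%:R)).
  - congr (_ * _).
    rewrite (sumW_pt eps (i, K0) (fun b => (~~ b)%:R)) big_bool /wt /=.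
    by rewrite mulr0 mulr1 add0r.
  - by move=> c d /=; rewrite st_merge.
  - by move=> c d /=; rewrite ffunE /= eqxx.
transitivity (\sum_z \sum_y nu z * ((\sum_c W c * (st c z i == y)%:R) * (eps * (active y K)%:R))).
  apply: eq_bigr => z _; rewrite -big_distrr /=; congr (_ * _).
  under eq_bigr do rewrite FE big_distrr /=.
  rewrite exchange_big /=; apply: eq_bigr => y _.
  transitivity ((\sum_c W c * ((st c z i == y)%:R * (~~ c (i, K0))%:R)) * (active y K)%:R).
    by rewrite big_distrl; apply: eq_bigr => c _ /=; ring.
  by rewrite E1; ring.
rewrite exchange_big /= /nu_oc big_distrr /= [RHS]big_mkcond /=; apply: eq_bigr => y _.
transitivity ((\sum_z nu z * (\sum_c W c * (st c z i == y)%:R)) * (eps * (active y K)%:R)).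
  by rewrite big_distrl; apply: eq_bigr => z _ /=; ring.
rewrite (stat (ltnW (ltn_ord i))).
have -> : active y K = occ y K.-1 && ~~ occ y K.
  rewrite /active; have -> : (K == 0%N) = false by lia.
  by have -> : (K == K.*2) = false by lia.
by case: (_ && _); rewrite /= ?mulr1 ?mulr0 ?mul0r; ring.
Qed.

Lemma W_ge0 (c : hconfig n K) : 0 <= W c.
Proof.
apply: prodr_ge0 => x _; rewrite /wt; case: (c x); move: heps => /andP[h1 h2]; lra.
Qed.

Definition Ez i := \sum_z nu z * (\sum_c W c * (hist c (h0z z) i K)%:~R).

Lemma Ez_step (i : 'I_n) : Ez i.+1 = Ez i + 1 + 2 * (eps * nu_oc nu).
Proof.
have [nu0 Snu Tnu] := hnu.
rewrite /Ez -(firee i).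
transitivity (\sum_z (nu z * (\sum_c W c * (hist c (h0z z) i K)%:~R) + nu z +
   2 * (nu z * (\sum_c W c * (fire K (hist c (h0z z) i) (colf c i) K)%:R)))).
  apply: eq_bigr => z _.
  transitivity (nu z * (\sum_c (W c * (hist c (h0z z) i K)%:~R + W c +
     2 * (W c * (fire K (hist c (h0z z) i) (colf c i) K)%:R)))).
    congr (_ * _); apply: eq_bigr => c _ /=; rewrite /step intrD.
    by case: (fire _ _ _ _); rewrite /=; ring.
  rewrite !big_split /= sumW -big_distrr /=; ring.
rewrite !big_split /= Snu -big_distrr /=; ring.
Qed.

Lemma Ez_n i : (i <= n)%N -> Ez i = i%:R * (1 + 2 * eps * nu_oc nu).
Proof.
elim: i => [|i IH] hi.
  rewrite /Ez mul0r big1 // => z _; rewrite big1 ?mulr0 // => c _.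
  by rewrite /= /h0z subrr mulr0.
have hi' : (i < n)%N by lia.
rewrite (Ez_step (Ordinal hi')) /= IH; last by lia.
rewrite -natr1; ring.
Qed.

Lemma ED_eq : ED K eps n = \sum_c W c * (hist c (h0y K) n K)%:~R.
Proof.
rewrite /ED; apply: eq_bigr => c _.
have [L [HL ->]] := Dist_hist K1 c R.
by rewrite -HL.
Qed.

Lemma main_bounds :
  n%:R * (1 + 2 * eps * nu_oc nu) <= ED K eps n /\
  ED K eps n <= n%:R * (1 + 2 * eps * nu_oc nu) + 2 * K%:R.
Proof.
have [nu0 Snu Tnu] := hnu.
have EDz : ED K eps n = \sum_z nu z * (\sum_c W c * (hist c (h0y K) n K)%:~R).
  by rewrite -big_distrl /= Snu mul1r ED_eq.
have hK : (K <= K.*2)%N by lia.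
rewrite -(Ez_n (leqnn n)) EDz; split.
  apply: ler_sum => z _; apply: ler_wpM2l => //.
  apply: ler_sum => c _; apply: ler_wpM2l; first exact: W_ge0.
  rewrite ler_int; have := (hist_cmp K1 c z n hK).1; rewrite addr0; done.
apply: le_trans (_ : \sum_z nu z * (\sum_c W c * ((hist c (h0z z) n K)%:~R + (K.*2)%:R)) <= _).
  apply: ler_sum => z _; apply: ler_wpM2l => //.
  apply: ler_sum => c _; apply: ler_wpM2l; first exact: W_ge0.
  have := (hist_cmp K1 c z n hK).2; rewrite -(ler_int R) intrD => H.
  exact: H.
rewrite /Ez le_eqVlt; apply/orP; left; apply/eqP.
transitivity (\sum_z (nu z * (\sum_c W c * (hist c (h0z z) n K)%:~R) + nu z * (K.*2)%:R)).
  apply: eq_bigr => z _; rewrite -mulrDr; congr (_ * _).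
  under eq_bigr do rewrite mulrDr.
  by rewrite big_split /= -big_distrl /= sumW mul1r.
rewrite big_split /= -big_distrl /= Snu mul1r; congr (_ + _).
by rewrite -muln2 natrM mulrC.
Qed.

End Prob.

End Aux.
Import Aux.
Unset Implicit Arguments.

Theorem proposition6 (R : realType) (K : nat) (eps : R)
    (nu : {ffun tstate K -> R}) (n : nat) :
  (1 <= K)%N -> 0 < eps < 1 -> tasep_stationary eps nu ->
  n%:R * (1 + 2 * eps * nu_oc nu) <= ED K eps n /\
  ED K eps n <= n%:R * (1 + 2 * eps * nu_oc nu) + 2 * K%:R.
Proof.
move=> K1 heps hnu.
exact: (@main_bounds R K eps nu n K1 heps hnu).
Qed.
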